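(* Let $C,D\subseteq\mathbb{R}^n$ be convex cones (nonempty, closed under addition and multiplication by nonnegative reals) that are closed and have nonempty interior in the Euclidean topology, and suppose $\langle c,d\rangle\ge0$ for all $c\in C$, $d\in D$, where $\langle\cdot,\cdot\rangle$ is the standard inner product. Equip $D$ with the weak upper topology $w(D,C)$. Then for every linear functional $\varphi\colon D\to[0,\infty)$ which is lower semicontinuous with respect to $w(D,C)$ there is a unique $x\in C$ such that $\varphi(y)=\langle x,y\rangle$ for all $y\in D$.
   Context: $[0,\infty)$ and $\overline{\mathbb{R}}_+=[0,+\infty]$ carry the upper topology, whose open sets are $\emptyset$, the whole space and the intervals $\{t\mid t>r\}$ for $r\in[0,\infty)$; a function is lower semicontinuous if it is continuous into this topology. The weak upper topology $w(D,C)$ on $D$ is the coarsest topology making all maps $y\mapsto\langle x,y\rangle$, $x\in C$, lower semicontinuous. A functional $\varphi\colon D\to[0,\infty)$ is linear if $\varphi(y+z)=\varphi(y)+\varphi(z)$ and $\varphi(ry)=r\varphi(y)$ for all $y,z\in D$, $r\ge0$. *)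

(* Defs.v *)
From Stdlib Require Import Reals.
From mathcomp Require Import all_boot.
Set Implicit Arguments. Unset Strict Implicit. Unset Printing Implicit Defensive.
Local Open Scope R_scope.

Definition vec (n : nat) := 'I_n -> R.

Definition vadd n (x y : vec n) : vec n := fun i => (x i + y i).
Definition vscale n (r : R) (x : vec n) : vec n := fun i => (r * x i).

Definition inner n (x y : vec n) : R := \big[Rplus/R0]_(i < n) (x i * y i).

Definition dist n (x y : vec n) : R :=
  sqrt (inner (fun i => x i - y i) (fun i => x i - y i)).

Definition convex_cone n (C : vec n -> Prop) : Prop :=
  (exists x, C x) /\
  (forall x y, C x -> C y -> C (vadd x y)) /\
  (forall r x, (0 <= r) -> C x -> C (vscale r x)).

Definition eclosed n (C : vec n -> Prop) : Prop :=
  forall x, (forall eps, (0 < eps) -> exists y, C y /\ (dist x y < eps)) -> C x.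

Definition has_interior n (C : vec n -> Prop) : Prop :=
  exists x eps, (0 < eps) /\ forall y, (dist x y < eps) -> C y.

(* Subbasic open sets of the weak upper topology w(D,C) on D:
   preimages under y |-> <x,y> (x in C) of the upper-topology open sets,
   i.e. D, empty, and {y in D | <x,y> > r} for r >= 0.
   A set U ⊆ D is w(D,C)-open iff every point of U has a basic neighbourhood
   (finite intersection of subbasic sets) contained in U. *)
Definition wopen n (C D : vec n -> Prop) (U : vec n -> Prop) : Prop :=
  (forall y, U y -> D y) /\
  forall y, U y ->
    exists l : list (vec n * R),
      (forall p, List.In p l -> C (fst p) /\ (0 <= snd p)) /\
      (forall p, List.In p l -> (snd p < inner (fst p) y)) /\
      (forall z, D z -> (forall p, List.In p l -> (snd p < inner (fst p) z)) -> U z).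

(* phi : D -> [0,oo) is lower semicontinuous w.r.t. w(D,C), where [0,oo]
   carries the upper topology (open sets: empty, whole, {t | t > r}, r >= 0). *)
Definition wlsc n (C D : vec n -> Prop) (phi : vec n -> R) : Prop :=
  forall r, (0 <= r) -> wopen C D (fun y => D y /\ (r < phi y)).

Definition linear_on n (D : vec n -> Prop) (phi : vec n -> R) : Prop :=
  (forall y z, D y -> D z -> phi (vadd y z) = (phi y + phi z)) /\
  (forall r y, (0 <= r) -> D y -> phi (vscale r y) = (r * phi y)).

(* Main.v *)
From HB Require Import structures.
Require Import Defs.
From Stdlib Require Import Reals Lra Psatz Classical ClassicalEpsilon FunctionalExtensionality.
From mathcomp Require Import all_boot.
Set Implicit Arguments. Unset Strict Implicit.
Local Open Scope R_scope.

HB.instance Definition _ := Monoid.isComLaw.Build R R0 Rplus (fun a b c => esym (Rplus_assoc a b c)) Rplus_comm Rplus_0_l.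

Section Sums.
Variable I : Type.
Lemma sum_add (r : seq I) (F G : I -> R) :
  \big[Rplus/R0]_(i <- r) (F i + G i) = \big[Rplus/R0]_(i <- r) F i + \big[Rplus/R0]_(i <- r) G i.
Proof. elim: r => [|a r IH]; rewrite ?big_nil ?big_cons; [lra|rewrite IH; lra]. Qed.
Lemma sum_scal (r : seq I) (a : R) (F : I -> R) :
  \big[Rplus/R0]_(i <- r) (a * F i) = a * \big[Rplus/R0]_(i <- r) F i.
Proof. elim: r => [|b r IH]; rewrite ?big_nil ?big_cons; [lra|rewrite IH; lra]. Qed.
Lemma sum_ge0 (r : seq I) (F : I -> R) : (forall i, 0 <= F i) ->
  0 <= \big[Rplus/R0]_(i <- r) F i.
Proof. move=> H; elim: r => [|b r IH]; rewrite ?big_nil ?big_cons; [lra|have := H b; lra]. Qed.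
Lemma sum_ext (r : seq I) (F G : I -> R) : (forall i, F i = G i) ->
  \big[Rplus/R0]_(i <- r) F i = \big[Rplus/R0]_(i <- r) G i.
Proof. by move=> H; apply: eq_bigr => i _. Qed.
Lemma sum_cv (r : seq I) (F : nat -> I -> R) (G : I -> R) :
  (forall i, Un_cv (fun m => F m i) (G i)) ->
  Un_cv (fun m => \big[Rplus/R0]_(i <- r) F m i) (\big[Rplus/R0]_(i <- r) G i).
Proof.
move=> H; elim: r => [|b r IH].
- rewrite big_nil. have E : (fun m => \big[Rplus/R0]_(i <- [::]) F m i) = fun _ => 0.
    by apply: functional_extensionality => m; rewrite big_nil.
  rewrite E => e he; exists 0%nat => m _; rewrite /R_dist Rminus_0_r Rabs_R0; lra.
- rewrite big_cons. have E : (fun m => \big[Rplus/R0]_(i <- b :: r) F m i) =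
   fun m => F m b + \big[Rplus/R0]_(i <- r) F m i.
    by apply: functional_extensionality => m; rewrite big_cons.
  rewrite E; exact: CV_plus.
Qed.
End Sums.

Lemma sum_single n (F : 'I_n -> R) (j : 'I_n) :
  (forall i, i != j -> F i = 0) -> \big[Rplus/R0]_(i < n) F i = F j.
Proof.
move=> H; rewrite (bigD1 j) //= big1; first lra.
by move=> i /H.
Qed.

Lemma sum_term n (F : 'I_n -> R) (j : 'I_n) :
  (forall i, 0 <= F i) -> F j <= \big[Rplus/R0]_(i < n) F i.
Proof.
move=> H; rewrite (bigD1 j) //=.
set S := \big[Rplus/R0]_(i < n | i != j) F i.
have HS : 0 <= S.
  by apply: big_ind; [lra| move=> a b; lra | move=> i _; exact: H].
lra.
Qed.

Definition vsub n (a b : vec n) : vec n := vadd a (vscale (-1) b).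
Definition nrm n (w : vec n) := inner w w.
Definition ev n (i : 'I_n) : vec n := fun j => if i == j then 1 else 0.

Section Vec.
Variable n : nat.
Implicit Types a b c w : vec n.
Lemma inner_addl a b c : inner (vadd a b) c = inner a c + inner b c.
Proof. rewrite /inner -sum_add; apply: sum_ext => i; rewrite /vadd; ring. Qed.
Lemma inner_addr a b c : inner a (vadd b c) = inner a b + inner a c.
Proof. rewrite /inner -sum_add; apply: sum_ext => i; rewrite /vadd; ring. Qed.
Lemma inner_scalel s a b : inner (vscale s a) b = s * inner a b.
Proof. rewrite /inner -sum_scal; apply: sum_ext => i; rewrite /vscale; ring. Qed.
Lemma inner_scaler s a b : inner a (vscale s b) = s * inner a b.
Proof. rewrite /inner -sum_scal; apply: sum_ext => i; rewrite /vscale; ring. Qed.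
Lemma inner_sym a b : inner a b = inner b a.
Proof. rewrite /inner; apply: sum_ext => i; ring. Qed.
Lemma inner_ev a (i : 'I_n) : inner a (ev i) = a i.
Proof.
rewrite /inner (sum_single (j:=i)); first by rewrite /ev eqxx; ring.
by move=> k hk; rewrite /ev eq_sym (negbTE hk); ring.
Qed.
Lemma nrm_ge0 w : 0 <= nrm w.
Proof. apply: sum_ge0 => i; nra. Qed.
Lemma nrm_term w (i : 'I_n) : w i * w i <= nrm w.
Proof. apply: (sum_term (F:=fun i => w i * w i)) => k; nra. Qed.
Lemma nrm_ev (i : 'I_n) : nrm (ev i) = 1.
Proof. by rewrite /nrm inner_ev /ev eqxx. Qed.
Lemma nrm0_eq a b : nrm (vsub a b) = 0 -> a = b.
Proof.
move=> H; apply: functional_extensionality => i.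
have := nrm_term (vsub a b) i; rewrite H /vsub /vadd /vscale => h; nra.
Qed.
Lemma dist_nrm a b : Defs.dist a b = sqrt (nrm (vsub a b)).
Proof.
rewrite /Defs.dist /nrm; f_equal; f_equal; apply: functional_extensionality => i;
rewrite /vsub /vadd /vscale; ring.
Qed.
Lemma cv_nrm (w : nat -> vec n) w0 : (forall i, Un_cv (fun m => w m i) (w0 i)) ->
  Un_cv (fun m => nrm (w m)) (nrm w0).
Proof. move=> H; apply: (@sum_cv _ _ (fun m i => w m i * w m i)) => i; exact: CV_mult. Qed.
End Vec.

Lemma sqrt_lt z e : 0 <= z -> z < e * e -> 0 < e -> sqrt z < e.
Proof.
move=> h1 h2 h3. rewrite -(sqrt_square e); last lra.
apply: sqrt_lt_1_alt; lra.
Qed.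

Lemma cv_inv : Un_cv (fun m => / (INR m + 1)) 0.
Proof.
move=> e he. have [N [HN HN0]] := archimed_cor1 e he.
exists N => m hm. rewrite /R_dist Rminus_0_r.
have hN : 0 < INR N by exact: lt_0_INR.
have hmN : INR N <= INR m by exact: le_INR.
rewrite Rabs_right; last (apply: Rle_ge; apply: Rlt_le; apply: Rinv_0_lt_compat; lra).
apply: Rle_lt_trans HN. apply: Rinv_le_contravar; lra.
Qed.

Lemma cv_const (l : R) : Un_cv (fun _ => l) l.
Proof. move=> e he; exists 0%nat => m _; rewrite /R_dist Rminus_diag Rabs_R0; lra. Qed.

Lemma quad_nonneg a b : (forall s, 0 < s -> s <= 1 -> 0 <= a * s + b * s * s) -> 0 <= a.
Proof.
move=> H; apply: Rnot_lt_le => ha.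
set B := Rabs b + 1.
have hB : 0 < B by have := Rabs_pos b; rewrite /B; lra.
set s := Rmin 1 (- a / (2 * B)).
have hs1 : s <= 1 by apply: Rmin_l.
have hs2 : s <= - a / (2 * B) by apply: Rmin_r.
have hs0 : 0 < s.
  apply: Rmin_glb_lt; first lra. apply: Rdiv_lt_0_compat; lra.
have hH := H s hs0 hs1.
have hb : b <= Rabs b := Rle_abs b.
have hsB : s * (2 * B) <= - a.
  have := Rmult_le_compat_r (2*B) _ _ (ltac:(lra) : 0 <= 2*B) hs2.
  rewrite /Rdiv Rmult_assoc Rinv_l; lra.
have h1 : s * (s * (2 * B)) <= s * (- a) by apply: Rmult_le_compat_l; lra.
have h2 : b * s * s <= (Rabs b + 1) * s * s by nra.
rewrite /B in h1; nra.
Qed.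

Ltac sumid := rewrite /nrm /inner -?sum_scal -?sum_add; apply: sum_ext => ?;
  rewrite /vsub /vadd /vscale; first [ring | field].

Section Sep.
Variable n : nat.
Variable C : vec n -> Prop.
Hypothesis hCc : convex_cone C.
Hypothesis hCcl : eclosed C.

Lemma sep (x : vec n) : ~ C x ->
  exists v, (forall c, C c -> 0 <= inner c v) /\ inner x v < 0.
Proof.
move=> hx.
have [[c0 hc0] [hadd hsc]] := hCc.
pose E := fun s => exists c, C c /\ s = - nrm (vsub x c).
have hEb : bound E.
  exists 0 => s [c [_ ->]]; have := nrm_ge0 (vsub x c); lra.
have hEne : exists s, E s by exists (- nrm (vsub x c0)); exists c0.
have [m [hm1 hm2]] := completeness E hEb hEne.
pose d := - m.
have hlow : forall c, C c -> d <= nrm (vsub x c).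
  move=> c hc; have := hm1 (- nrm (vsub x c)) (ex_intro _ c (conj hc erefl)); rewrite /d; lra.
have happ : forall e, 0 < e -> exists c, C c /\ nrm (vsub x c) < d + e.
  move=> e he; apply: NNPP => hne.
  have : m <= m - e.
    apply: hm2 => s [c [hc ->]].
    have : ~ (nrm (vsub x c) < d + e) by move=> h; apply: hne; exists c.
    rewrite /d; lra.
  lra.
have hex : forall k : nat, exists c, C c /\ nrm (vsub x c) < d + / (INR k + 1).
  move=> k; apply: happ; apply: Rinv_0_lt_compat; have := pos_INR k; lra.
pose cs k := proj1_sig (constructive_indefinite_description _ (hex k)).
have hcs : forall k, C (cs k) /\ nrm (vsub x (cs k)) < d + / (INR k + 1).
  move=> k; exact: (proj2_sig (constructive_indefinite_description _ (hex k))).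
have hcauchy : forall k m, nrm (vsub (cs m) (cs k)) <= 2 * / (INR k + 1) + 2 * / (INR m + 1).
  move=> k l.
  pose mid := vscale (/2) (vadd (cs k) (cs l)).
  have hmid : C mid by apply: hsc; [lra | apply: hadd; [exact: (hcs k).1 | exact: (hcs l).1]].
  have hid : nrm (vsub (cs l) (cs k)) + 4 * nrm (vsub x mid) =
     2 * nrm (vsub x (cs k)) + 2 * nrm (vsub x (cs l)).
    rewrite /mid; sumid.
  have := hlow _ hmid; have := (hcs k).2; have := (hcs l).2; lra.
have hinv_pos : forall k : nat, 0 < / (INR k + 1).
  move=> k; apply: Rinv_0_lt_compat; have := pos_INR k; lra.
have hinv_le : forall k N : nat, (0 < N)%coq_nat -> (N <= k)%coq_nat -> / (INR k + 1) <= / INR N.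
  move=> k N hN hk.
  have h0 := lt_0_INR _ hN. have := le_INR _ _ hk => h1.
  apply: Rinv_le_contravar; lra.
have hcc : forall i, Cauchy_crit (fun m => cs m i).
  move=> i e he.
  have he2 : 0 < e * e / 4 by nra.
  have [N [HN HN0]] := archimed_cor1 _ he2.
  exists N => a b ha hb; rewrite /R_dist.
  have h1 := hcauchy a b. have h2 := nrm_term (vsub (cs b) (cs a)) i.
  have h3 := hinv_le _ _ HN0 ha. have h4 := hinv_le _ _ HN0 hb.
  have h5 : vsub (cs b) (cs a) i = cs b i - cs a i by rewrite /vsub /vadd /vscale; ring.
  rewrite h5 in h2.
  have h6 : (cs a i - cs b i) * (cs a i - cs b i) < e * e by lra.
  apply: Rabs_def1; nra.
pose p i := proj1_sig (R_complete _ (hcc i)).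
have hp : forall i, Un_cv (fun m => cs m i) (p i).
  move=> i; exact: (proj2_sig (R_complete _ (hcc i))).
have hpk : forall k, nrm (vsub p (cs k)) <= 2 * / (INR k + 1).
  move=> k.
  have hcv1 : Un_cv (fun m => nrm (vsub (cs m) (cs k))) (nrm (vsub p (cs k))).
    apply: cv_nrm => i; rewrite /vsub /vadd /vscale.
    apply: CV_plus; [exact: hp | exact: cv_const].
  have hcv2 : Un_cv (fun m => 2 * / (INR k + 1) + 2 * / (INR m + 1)) (2 * / (INR k + 1) + 2 * 0).
    apply: CV_plus; [exact: cv_const | apply: CV_mult; [exact: cv_const | exact: cv_inv]].
  have := Rle_cv_lim (hcauchy k) hcv1 hcv2; lra.
have hpC : C p.
  apply: hCcl => e he.
  have he2 : 0 < e * e / 2 by nra.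
  have [N [HN HN0]] := archimed_cor1 _ he2.
  exists (cs N); split; first exact: (hcs N).1.
  rewrite dist_nrm; apply: sqrt_lt => //; first exact: nrm_ge0.
  have := hpk N; have := hinv_le N N HN0 (le_n N); lra.
have hpmin : forall q, C q -> nrm (vsub x p) <= nrm (vsub x q).
  move=> q hq.
  have hcv1 : Un_cv (fun k => nrm (vsub x (cs k))) (nrm (vsub x p)).
    apply: cv_nrm => i; rewrite /vsub /vadd /vscale.
    apply: CV_plus; [exact: cv_const | apply: CV_mult; [exact: cv_const | exact: hp]].
  have hcv2 : Un_cv (fun k => d + / (INR k + 1)) (d + 0).
    apply: CV_plus; [exact: cv_const | exact: cv_inv].
  have := Rle_cv_lim (fun k => Rlt_le _ _ (hcs k).2) hcv1 hcv2.
  have := hlow _ hq; lra.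
exists (vsub p x); split.
- move=> c hc.
  have hq : forall s, 0 < s -> s <= 1 -> 0 <= 2 * inner c (vsub p x) * s + nrm c * s * s.
    move=> s hs _.
    have hC : C (vadd p (vscale s c)) by apply: hadd => //; apply: hsc => //; lra.
    have := hpmin _ hC.
    have -> : nrm (vsub x (vadd p (vscale s c))) =
      nrm (vsub x p) + (2 * s) * inner c (vsub p x) + (s * s) * nrm c by sumid.
    nra.
  have := quad_nonneg hq; lra.
- have hq : forall s, 0 < s -> s <= 1 -> 0 <= (- 2 * inner p (vsub p x)) * s + nrm p * s * s.
    move=> s hs hs1.
    have hC : C (vscale (1 - s) p) by apply: hsc => //; lra.
    have := hpmin _ hC.
    have -> : nrm (vsub x (vscale (1 - s) p)) =
      nrm (vsub x p) + (- 2 * s) * inner p (vsub p x) + (s * s) * nrm p by sumid.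
    nra.
  have h1 := quad_nonneg hq.
  have h2 : inner x (vsub p x) = inner p (vsub p x) + (-1) * nrm (vsub p x) by sumid.
  have h3 := nrm_ge0 (vsub p x).
  have h4 : nrm (vsub p x) <> 0 by move=> /nrm0_eq E0; apply: hx; rewrite -E0.
  lra.
Qed.
End Sep.

Lemma vsum_lin n (D : vec n -> Prop) (phi : vec n -> R) (hDc : convex_cone D)
  (hlin : linear_on D phi) (I : Type) (r : seq I) (F : I -> vec n) :
  (forall i, D (F i)) ->
  D (fun j => \big[Rplus/R0]_(i <- r) F i j) /\
  phi (fun j => \big[Rplus/R0]_(i <- r) F i j) = \big[Rplus/R0]_(i <- r) phi (F i).
Proof.
move=> hF; have [[c0 hc0] [hadd hsc]] := hDc; have [hl1 hl2] := hlin.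
elim: r => [|a r [IH1 IH2]].
- have E : (fun j => \big[Rplus/R0]_(i <- [::]) F i j) = vscale 0 c0.
    apply: functional_extensionality => j; rewrite big_nil /vscale; ring.
  rewrite E big_nil; split; first by apply: hsc => //; lra.
  rewrite hl2 //; lra.
- have E : (fun j => \big[Rplus/R0]_(i <- a :: r) F i j) =
    vadd (F a) (fun j => \big[Rplus/R0]_(i <- r) F i j).
    by apply: functional_extensionality => j; rewrite big_cons.
  rewrite E big_cons; split; first exact: hadd.
  by rewrite hl1 // IH2.
Qed.

Unset Implicit Arguments.
Theorem mainTheorem8 (n : nat) (C D : vec n -> Prop)
  (hCc : convex_cone C) (hDc : convex_cone D)
  (hCcl : eclosed C) (hDcl : eclosed D)
  (hCi : has_interior C) (hDi : has_interior D)
  (hdual : forall c d, C c -> D d -> (0 <= inner c d))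
  (phi : vec n -> R)
  (hpos : forall y, D y -> (0 <= phi y))
  (hlin : linear_on D phi)
  (hlsc : wlsc C D phi) :
  exists! x : vec n, C x /\ forall y, D y -> phi y = inner x y.
Proof.
have [[c0 hc0] [hadd hsc]] := hDc; have [hl1 hl2] := hlin.
have [y0 [eps [heps hball]]] := hDi.
have hy0 : D y0.
  apply: hball; rewrite dist_nrm.
  have -> : nrm (vsub y0 y0) = 0 * nrm y0 by sumid.
  rewrite Rmult_0_l sqrt_0; lra.
have inD : forall t w, t * t * nrm w < eps * eps -> D (vadd y0 (vscale t w)).
  move=> t w h; apply: hball; rewrite dist_nrm.
  have E : nrm (vsub y0 (vadd y0 (vscale t w))) = (t * t) * nrm w by sumid.
  rewrite E; apply: sqrt_lt => //.
  have := nrm_ge0 w; nra.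
pose dl := eps / 2.
have hdl : 0 < dl by rewrite /dl; lra.
pose up (i : 'I_n) := vadd y0 (vscale dl (ev i)).
pose um (i : 'I_n) := vadd y0 (vscale (- dl) (ev i)).
have hup : forall i, D (up i).
  move=> i; apply: inD; rewrite nrm_ev /dl; nra.
have hum : forall i, D (um i).
  move=> i; apply: inD; rewrite nrm_ev /dl; nra.
pose x (i : 'I_n) := (phi (up i) - phi y0) / dl.
have hrep : forall y, D y -> phi y = inner x y.
  move=> y hy.
  pose u (i : 'I_n) := if Rle_dec 0 (y i) then up i else um i.
  pose sg (i : 'I_n) := if Rle_dec 0 (y i) then 1 else -1.
  pose a (i : 'I_n) := Rabs (y i) / dl.
  have ha : forall i, 0 <= a i.
    move=> i; rewrite /a; apply: Rmult_le_pos; first exact: Rabs_pos.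
    apply: Rlt_le; exact: Rinv_0_lt_compat.
  have hu : forall i, D (u i) by move=> i; rewrite /u; case: (Rle_dec 0 (y i)) => hh; [exact: hup | exact: hum].
  have hasg : forall i, a i * sg i * dl = y i.
    move=> i; rewrite /a /sg; case: (Rle_dec 0 (y i)) => h /=.
    - rewrite Rabs_right; [field; lra | lra].
    - rewrite Rabs_left1; [field; lra | lra].
  have hphiu : forall i, phi (u i) - phi y0 = sg i * dl * x i.
    move=> i; rewrite /u /sg /x; case: (Rle_dec 0 (y i)) => h /=; first (field; lra).
    have E : vadd (um i) (up i) = vscale 2 y0.
      apply: functional_extensionality => j; rewrite /um /up /vadd /vscale; ring.
    have := hl1 _ _ (hum i) (hup i); rewrite E hl2 //; last lra.
    move=> h2; field_simplify; [lra | lra].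
  have [hD1 hP1] := vsum_lin hDc hlin (index_enum 'I_n) (fun i => hsc _ _ (ha i) hy0).
  have [hD2 hP2] := vsum_lin hDc hlin (index_enum 'I_n) (fun i => hsc _ _ (ha i) (hu i)).
  have Ev : vadd y (fun j => \big[Rplus/R0]_(i <- index_enum 'I_n) vscale (a i) y0 j) =
     (fun j => \big[Rplus/R0]_(i <- index_enum 'I_n) vscale (a i) (u i) j).
    apply: functional_extensionality => j.
    have E1 : \big[Rplus/R0]_(i <- index_enum 'I_n) vscale (a i) (u i) j =
      \big[Rplus/R0]_(i <- index_enum 'I_n) vscale (a i) y0 j +
      \big[Rplus/R0]_(i <- index_enum 'I_n) (a i * sg i * dl * ev i j).
      rewrite -sum_add; apply: sum_ext => i.
      rewrite /vscale /u /sg; case: (Rle_dec 0 (y i)) => h /=; rewrite /up /um /vadd /vscale; ring.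
    have E2 : \big[Rplus/R0]_(i <- index_enum 'I_n) (a i * sg i * dl * ev i j) = y j.
      rewrite (sum_single (j:=j)); first by rewrite hasg /ev eqxx; ring.
      by move=> i hi; rewrite /ev (negbTE hi); ring.
    by rewrite E1 E2 /vadd; ring.
  have := hl1 _ _ hy hD1; rewrite Ev hP2 hP1 => hEq.
  have hs : \big[Rplus/R0]_(i <- index_enum 'I_n) phi (vscale (a i) (u i)) =
     \big[Rplus/R0]_(i <- index_enum 'I_n) (x i * y i) +
     \big[Rplus/R0]_(i <- index_enum 'I_n) phi (vscale (a i) y0).
    rewrite -sum_add; apply: sum_ext => i.
    rewrite hl2 // hl2 //.
    have := hphiu i; have := hasg i => h1 h2.
    have -> : phi (u i) = sg i * dl * x i + phi y0 by lra.
    rewrite -h1; ring.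
  rewrite /inner. have -> : \big[Rplus/R0]_(i < n) (x i * y i) = \big[Rplus/R0]_(i <- index_enum 'I_n) (x i * y i) by []. lra.
exists x; split.
- split => //.
  apply: NNPP => hxC.
  have [v [hv1 hv2]] := sep hCc hCcl hxC.
  pose K := nrm v + 1.
  have hK : 0 < K by have := nrm_ge0 v; rewrite /K; lra.
  pose t := eps / (2 * K).
  have ht : 0 < t by rewrite /t; apply: Rdiv_lt_0_compat; lra.
  have htK : t * (2 * K) = eps by rewrite /t; field; lra.
  pose z := vadd y0 (vscale t v).
  have hz : D z.
    apply: inD. have := nrm_ge0 v. rewrite /K in htK. nra.
  have hphiz : phi z = phi y0 + t * inner x v.
    rewrite !hrep // /z inner_addr inner_scaler //.
  pose r := phi y0 + t * inner x v.
  have hr1 : 0 <= r by rewrite /r -hphiz; exact: hpos.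
  have hr2 : r < phi y0 by rewrite /r; nra.
  have [_ hw] := hlsc r hr1.
  have [l [hl1' [hl2' hl3']]] := hw y0 (conj hy0 hr2).
  have [_ hzr] : D z /\ r < phi z.
    apply: hl3' => // pr hpr.
    have [hpC _] := hl1' pr hpr.
    have := hl2' pr hpr.
    have := hv1 _ hpC.
    rewrite /z inner_addr inner_scaler; nra.
  rewrite hphiz /r in hzr; lra.
- move=> x' [hx'C hx'].
  apply: functional_extensionality => i.
  have h1 := hx' _ (hup i). rewrite hrep // /up !inner_addr !inner_scaler !inner_ev in h1.
  have h2 := hx' _ hy0. rewrite hrep // in h2.
  have : dl * x i = dl * x' i by lra.
  move=> h3; apply: (Rmult_eq_reg_l dl) => //; lra.
Qed.
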